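(* Let $k\ge1$ and let $C_1,\dots,C_t$ be any symmetric chain decomposition of $B_k$ (identified with $\{0,1\}^k$), listed in order of non-increasing length. Define a total order $\preccurlyeq$ on $B_k$ by $\mathbf b\preccurlyeq\mathbf b'$ iff $\mathbf b\in C_i$, $\mathbf b'\in C_j$ with $i<j$, or $\mathbf b,\mathbf b'$ lie in the same $C_i$ and $\mathbf b\subseteq\mathbf b'$. Let $P=\bigcup_{1\le i\le j\le t}P_{ij}$ where $P_{ij}=C_i\times C_j$ for $i<j$ and $P_{ii}=\{(\mathbf b,\mathbf b')\in C_i\times C_i:\mathbf b\subseteq\mathbf b'\}$, and identify $(\mathbf b,\mathbf b')\in P$ with the concatenated string $\mathbf b\mathbf b'^{\,r}\in B_{2k}$ ($\mathbf b'^{\,r}$ the reverse of $\mathbf b'$), with the induced inclusion order. Then $P$ can be partitioned into chains each of which is a saturated chain $x_1<\dots<x_\ell$ in $B_{2k}$ with $|x_1|+|x_\ell|=2k$; and the map $(\mathbf b,\mathbf b')\mapsto\{\mathbf b\mathbf b'^{\,r},\mathbf b'\mathbf b^{\,r}\}$ is an order-preserving bijection from $P$ onto $B_{2k}/G$, where $G=\{1,\rho\}$ with $\rho=(1\;2k)(2\;2k{-}1)\cdots(k\;k{+}1)$.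
   Context: $B_k$ is the Boolean lattice of subsets of $[k]$, identified with binary strings of length $k$. A symmetric chain decomposition of a ranked poset is a partition into saturated chains $x_1<\dots<x_\ell$ with $r(x_1)+r(x_\ell)$ equal to the rank of the poset. For $G\le S_{2k}$, $B_{2k}/G$ is the poset of $G$-orbits $[A]$ ordered by $[A]\le[B]$ iff $X\subseteq Y$ for some $X\in[A]$, $Y\in[B]$. *)

(* Defs.v *)
From HB Require Import structures.
From mathcomp Require Import all_boot all_order all_fingroup.
Set Implicit Arguments. Unset Strict Implicit. Unset Printing Implicit Defensive.

(* Subsets of a finite type T, ordered by inclusion, ranked by cardinality.
   B_k is {set 'I_k} (a set = the binary string of its indicator). *)

Definition sat_chain (T : finType) (c : seq {set T}) : bool :=
  if c is x :: c' then
    path (fun a b : {set T} => (a \subset b) && (#|b| == #|a|.+1)) x c'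
  else false.

Definition sym_chain (T : finType) (n : nat) (c : seq {set T}) : bool :=
  if c is x :: c' then #|x| + #|last x c'| == n else false.

Definition is_scd (T : finType) (Q : {set {set T}}) (n : nat)
    (cs : seq (seq {set T})) : bool :=
  all (fun c => sat_chain c && sym_chain n c) cs && perm_eq (flatten cs) (enum Q).

(* the string b b'^r in B_{2k}: positions 0..k-1 read b, position k+j reads
   b' at index k-1-j *)
Definition cat_rev (k : nat) (b b' : {set 'I_k}) : {set 'I_(k + k)} :=
  [set i | match split i with
           | inl j => j \in b
           | inr j => rev_ord j \in b'
           end].

(* P_ij (chains indexed from 0) *)
Definition Pij (k : nat) (cs : seq (seq {set 'I_k})) (i j : nat)
    : {set {set 'I_k} * {set 'I_k}} :=
  [set p | [&& p.1 \in nth [::] cs i, p.2 \in nth [::] cs j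
             & (i < j) || (p.1 \subset p.2)]].

Definition P_pairs (k : nat) (cs : seq (seq {set 'I_k}))
    : {set {set 'I_k} * {set 'I_k}} :=
  \bigcup_(i < size cs) \bigcup_(j < size cs | i <= j) Pij cs i j.

(* rho = (1 2k)(2 2k-1)...(k k+1), i.e. i |-> 2k-1-i on 0-indexed positions *)
Definition rho (k : nat) : {perm 'I_(k + k)} := perm (@rev_ord_inj (k + k)).
Definition Grho (k : nat) : {set {perm 'I_(k + k)}} := [set 1%g; rho k].

Definition qorbit (T : finType) (G : {set {perm T}}) (A : {set T})
    : {set {set T}} := [set [set (s : {perm T}) x | x in A] | s in G].
Definition quot_poset (T : finType) (G : {set {perm T}}) : {set {set {set T}}} :=
  [set qorbit G A | A : {set T}].
Definition qle (T : finType) (X Y : {set {set T}}) : bool :=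
  [exists x in X, exists y in Y, x \subset y].

Definition pair_map (k : nat) (p : {set 'I_k} * {set 'I_k}) : {set {set 'I_(k + k)}} :=
  [set cat_rev p.1 p.2; cat_rev p.2 p.1].

(* Main.v *)
Require Import Defs.
From HB Require Import structures.
From mathcomp Require Import all_boot all_order all_fingroup.
From mathcomp Require Import zify.
Set Implicit Arguments. Unset Strict Implicit. Unset Printing Implicit Defensive.

Lemma split_l k (j : 'I_k) : split (lshift k j) = inl j.
Proof. exact: (unsplitK (inl j)). Qed.
Lemma split_r k (j : 'I_k) : split (rshift k j) = inr j.
Proof. exact: (unsplitK (inr j)). Qed.

Definition Lft k (A : {set 'I_(k + k)}) : {set 'I_k} := [set j | lshift k j \in A].
Definition Rgt k (A : {set 'I_(k + k)}) : {set 'I_k} := [set j | rshift k (rev_ord j) \in A].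

Lemma Lft_cr k (b b' : {set 'I_k}) : Lft (cat_rev b b') = b.
Proof. by apply/setP=> j; rewrite !inE split_l. Qed.
Lemma Rgt_cr k (b b' : {set 'I_k}) : Rgt (cat_rev b b') = b'.
Proof. by apply/setP=> j; rewrite !inE split_r rev_ordK. Qed.

Lemma cr_LR k (A : {set 'I_(k + k)}) : cat_rev (Lft A) (Rgt A) = A.
Proof.
apply/setP=> i; rewrite !inE; case: splitP => j Hj; rewrite inE.
  by have -> : i = lshift k j by apply: val_inj.
by rewrite rev_ordK; have -> : i = rshift k j by apply: val_inj.
Qed.

Lemma cr_inj k (b b' c c' : {set 'I_k}) : cat_rev b b' = cat_rev c c' -> b = c /\ b' = c'.
Proof.
move=> E; split; [have := congr1 (@Lft k) E | have := congr1 (@Rgt k) E];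
  by rewrite ?Lft_cr ?Rgt_cr.
Qed.

Lemma Lft_sub k (A B : {set 'I_(k + k)}) : A \subset B -> Lft A \subset Lft B.
Proof. by move=> /subsetP H; apply/subsetP=> j; rewrite !inE => /H. Qed.
Lemma Rgt_sub k (A B : {set 'I_(k + k)}) : A \subset B -> Rgt A \subset Rgt B.
Proof. by move=> /subsetP H; apply/subsetP=> j; rewrite !inE => /H. Qed.

Lemma cr_sub k (b b' c c' : {set 'I_k}) :
  (cat_rev b b' \subset cat_rev c c') = (b \subset c) && (b' \subset c').
Proof.
apply/idP/andP.
  move=> H; split.
    by have := Lft_sub H; rewrite !Lft_cr.
  by have := Rgt_sub H; rewrite !Rgt_cr.
case=> /subsetP H1 /subsetP H2; apply/subsetP=> i; rewrite !inE.
by case: (split i) => j; [apply: H1 | apply: H2].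
Qed.

Lemma card_LR k (A : {set 'I_(k + k)}) : #|A| = #|Lft A| + #|Rgt A|.
Proof.
rewrite -!sum1_card big_split_ord /=.
congr (_ + _); first by apply: eq_bigl => j; rewrite inE.
rewrite (reindex_inj (@rev_ord_inj k)) /=.
by apply: eq_bigl => j; rewrite inE.
Qed.

Lemma cr_card k (b b' : {set 'I_k}) : #|cat_rev b b'| = #|b| + #|b'|.
Proof. by rewrite card_LR Lft_cr Rgt_cr. Qed.

Lemma rev_lshift k (j : 'I_k) : rev_ord (lshift k j) = rshift k (rev_ord j).
Proof. apply: val_inj => /=; have := ltn_ord j; lia. Qed.
Lemma rev_rshift k (j : 'I_k) : rev_ord (rshift k (rev_ord j)) = lshift k j.
Proof. apply: val_inj => /=; have := ltn_ord j; lia. Qed.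

Lemma rev_rshift' k (j : 'I_k) : rev_ord (rshift k j) = lshift k (rev_ord j).
Proof. apply: val_inj => /=; have := ltn_ord j; lia. Qed.

Lemma rho_img k (A : {set 'I_(k + k)}) : [set rho k x | x in A] = [set i | rev_ord i \in A].
Proof.
apply/setP=> i; rewrite inE; apply/imsetP/idP.
  by case=> x Hx ->; rewrite permE rev_ordK.
by move=> H; exists (rev_ord i) => //; rewrite permE rev_ordK.
Qed.

Lemma rho_cr k (b b' : {set 'I_k}) : [set rho k x | x in cat_rev b b'] = cat_rev b' b.
Proof.
rewrite rho_img; apply/setP=> i; rewrite !inE; case: (splitP i) => j Hj.
  have -> : i = lshift k j by apply: val_inj.
  by rewrite rev_lshift split_r rev_ordK.
have -> : i = rshift k j by apply: val_inj.
by rewrite rev_rshift' split_l.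
Qed.
Lemma sat_step (T : finType) (c : seq {set T}) t : sat_chain c -> t.+1 < size c ->
  nth set0 c t \subset nth set0 c t.+1 /\ #|nth set0 c t.+1| = (#|nth set0 c t|).+1.
Proof.
case: c => [|x c'] //= /(pathP set0) H Ht.
by have /andP[-> /eqP ->] := H t Ht.
Qed.

Lemma sat_card (T : finType) (c : seq {set T}) t : sat_chain c -> t < size c ->
  #|nth set0 c t| = #|nth set0 c 0| + t.
Proof.
move=> Hc; elim: t => [|t IH] Ht; first by rewrite addn0.
have [_ ->] := sat_step Hc Ht; rewrite IH ?addnS //; exact: ltnW.
Qed.

Lemma sat_sub (T : finType) (c : seq {set T}) x y : sat_chain c -> x <= y -> y < size c ->
  nth set0 c x \subset nth set0 c y.
Proof.
move=> Hc Hxy; elim: y Hxy => [|y IH]; first by rewrite leqn0 => /eqP ->.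
rewrite leq_eqVlt => /orP[/eqP -> //|Hxy] Hy.
have [H1 _] := sat_step Hc Hy.
apply: subset_trans H1; apply: IH => //; exact: ltnW.
Qed.

Lemma sat_sym (T : finType) (c : seq {set T}) n : sat_chain c -> sym_chain n c ->
  #|nth set0 c 0| + (#|nth set0 c 0| + (size c).-1) = n.
Proof.
move=> Hc; case: c Hc => [|x c'] //= Hc /eqP <-; congr (_ + _).
have := @sat_card T (x :: c') (size c') Hc (ltnSn _) => /= <-.
by rewrite -[last x c']/(last set0 (x :: c')) -nth_last.
Qed.

Lemma flatten_disj (T : eqType) (cs : seq (seq T)) i j b : uniq (flatten cs) ->
  i < size cs -> j < size cs -> b \in nth [::] cs i -> b \in nth [::] cs j -> i = j.
Proof.
elim: cs i j => [|c cs IH] [|i] [|j] //=; rewrite cat_uniq => /and3P[_ Hh Hu] Hi Hj Hbi Hbj.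
- case/negP: Hh; apply/hasP; exists b => //; apply/flattenP; exists (nth [::] cs j) => //.
  exact: mem_nth.
- case/negP: Hh; apply/hasP; exists b => //; apply/flattenP; exists (nth [::] cs i) => //.
  exact: mem_nth.
- by rewrite (IH i j).
Qed.
Definition CC k (cs : seq (seq {set 'I_k})) i := nth [::] cs i.
Definition EE k (cs : seq (seq {set 'I_k})) i x := nth set0 (CC cs i) x.
Definition mm k (cs : seq (seq {set 'I_k})) i := (size (CC cs i)).-1.
Definition RR k (cs : seq (seq {set 'I_k})) i := #|EE cs i 0|.

Section S.
End S.

Lemma chain_ok k (cs : seq (seq {set 'I_k})) i : is_scd [set: {set 'I_k}] k cs ->
  i < size cs -> sat_chain (CC cs i) /\ sym_chain k (CC cs i).
Proof.
case/andP=> /allP H _ Hi; have /andP[] := H _ (mem_nth [::] Hi); done.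
Qed.

Lemma size_pos k (cs : seq (seq {set 'I_k})) i : is_scd [set: {set 'I_k}] k cs ->
  i < size cs -> 0 < size (CC cs i).
Proof. by move=> H Hi; have [] := chain_ok H Hi; case: (CC cs i). Qed.

Lemma EE_card k (cs : seq (seq {set 'I_k})) i x : is_scd [set: {set 'I_k}] k cs ->
  i < size cs -> x < size (CC cs i) -> #|EE cs i x| = RR cs i + x.
Proof. by move=> H Hi Hx; have [Hs _] := chain_ok H Hi; rewrite /EE sat_card. Qed.

Lemma RR_mm k (cs : seq (seq {set 'I_k})) i : is_scd [set: {set 'I_k}] k cs ->
  i < size cs -> RR cs i + (RR cs i + mm cs i) = k.
Proof. by move=> H Hi; have [Hs Hy] := chain_ok H Hi; exact: sat_sym Hs Hy. Qed.

Lemma EE_sub k (cs : seq (seq {set 'I_k})) i x y : is_scd [set: {set 'I_k}] k cs ->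
  i < size cs -> x <= y -> y < size (CC cs i) -> EE cs i x \subset EE cs i y.
Proof. by move=> H Hi; have [Hs _] := chain_ok H Hi; exact: sat_sub. Qed.

Lemma EE_sub_le k (cs : seq (seq {set 'I_k})) i x y : is_scd [set: {set 'I_k}] k cs ->
  i < size cs -> x < size (CC cs i) -> y < size (CC cs i) ->
  EE cs i x \subset EE cs i y -> x <= y.
Proof.
move=> H Hi Hx Hy /subset_leq_card; rewrite !(EE_card H Hi) //; lia.
Qed.

Lemma EE_inj k (cs : seq (seq {set 'I_k})) i x y : is_scd [set: {set 'I_k}] k cs ->
  i < size cs -> x < size (CC cs i) -> y < size (CC cs i) ->
  EE cs i x = EE cs i y -> x = y.
Proof.
move=> H Hi Hx Hy E; have := EE_card H Hi Hx; rewrite E (EE_card H Hi Hy); lia.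
Qed.

Lemma chain_disj k (cs : seq (seq {set 'I_k})) i j b : is_scd [set: {set 'I_k}] k cs ->
  i < size cs -> j < size cs -> b \in CC cs i -> b \in CC cs j -> i = j.
Proof.
case/andP=> _ Hp; apply: flatten_disj.
by rewrite (perm_uniq Hp) enum_uniq.
Qed.

Lemma find_chain k (cs : seq (seq {set 'I_k})) b : is_scd [set: {set 'I_k}] k cs ->
  exists i x, [/\ i < size cs, x < size (CC cs i) & b = EE cs i x].
Proof.
case/andP=> _ Hp.
have : b \in flatten cs by rewrite (perm_mem Hp) mem_enum inE.
case/flattenP=> c Hc Hb.
exists (index c cs), (index b c).
have E : CC cs (index c cs) = c by rewrite /CC nth_index.
by rewrite /EE E !index_mem Hc Hb nth_index.
Qed.

Lemma mem_CC k (cs : seq (seq {set 'I_k})) i b :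
  (b \in CC cs i) <-> exists2 x, x < size (CC cs i) & b = EE cs i x.
Proof.
split; first by move=> Hb; exists (index b (CC cs i)); rewrite ?index_mem // /EE nth_index.
by case=> x Hx ->; exact: mem_nth.
Qed.

Lemma size_mono k (cs : seq (seq {set 'I_k})) i j : sorted geq (map size cs) ->
  i <= j -> j < size cs -> size (CC cs j) <= size (CC cs i).
Proof.
move=> Hs Hij Hj.
have := @sorted_leq_nth _ geq (fun a b c (h1 : a <= b) (h2 : c <= a) => leq_trans h2 h1) leqnn 0 _ Hs i j.
rewrite !inE size_map /CC !(nth_map [::]) //; first by apply; rewrite ?(leq_ltn_trans Hij).
exact: leq_ltn_trans Hij Hj.
Qed.
Lemma P_mem_raw k (cs : seq (seq {set 'I_k})) p :
  (p \in P_pairs cs) <-> exists i j, [/\ i <= j, j < size cs, p.1 \in CC cs i, p.2 \in CC cs j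
                                   & (i < j) || (p.1 \subset p.2)].
Proof.
split.
  case/bigcupP=> i _ /bigcupP[j Hij]; rewrite inE => /and3P[H1 H2 H3].
  by exists i, j; split.
case=> i [j [Hij Hj H1 H2 H3]].
have Hi : i < size cs by exact: leq_ltn_trans Hij Hj.
apply/bigcupP; exists (Ordinal Hi) => //; apply/bigcupP; exists (Ordinal Hj) => //.
by rewrite inE H1 H2 H3.
Qed.

Lemma P_mem k (cs : seq (seq {set 'I_k})) p : is_scd [set: {set 'I_k}] k cs ->
  (p \in P_pairs cs) <-> exists i j x y, [/\ i <= j, j < size cs, x < size (CC cs i),
      y < size (CC cs j) & p = (EE cs i x, EE cs j y) /\ ((i < j) || (x <= y))].
Proof.
move=> H; rewrite P_mem_raw; split.
  case=> i [j [Hij Hj /mem_CC[x Hx E1] /mem_CC[y Hy E2] H3]].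
  have Hi : i < size cs by exact: leq_ltn_trans Hij Hj.
  exists i, j, x, y; split=> //; split; first by case: p E1 E2 {H3} => /= ? ? -> ->.
  case: ltngtP Hij H3 => // Eij _; rewrite /= E1 E2 => Hs.
  by move: Hy Hs; rewrite -Eij => Hy; exact: EE_sub_le.
case=> i [j [x [y [Hij Hj Hx Hy [-> H3]]]]].
have Hi : i < size cs by exact: leq_ltn_trans Hij Hj.
exists i, j; split=> //=; try exact: mem_nth.
case: ltngtP Hij H3 => // Eij _ /= Hxy.
by move: Hy; rewrite -Eij => Hy; exact: EE_sub.
Qed.

Lemma qorbit_cr k (b b' : {set 'I_k}) :
  qorbit (Grho k) (cat_rev b b') = [set cat_rev b b'; cat_rev b' b].
Proof.
rewrite /qorbit /Grho imsetU1 imset_set1 rho_cr; congr (_ |: _).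
by rewrite (eq_imset _ (fun x => perm1 x)) imset_id.
Qed.

Lemma part2 k (cs : seq (seq {set 'I_k})) : is_scd [set: {set 'I_k}] k cs ->
  [/\ {in P_pairs cs &, injective (@pair_map k)},
      (@pair_map k) @: P_pairs cs = quot_poset (Grho k)
    & {in P_pairs cs &, forall p q,
          cat_rev p.1 p.2 \subset cat_rev q.1 q.2 ->
          qle (pair_map p) (pair_map q)}].
Proof.
move=> H; split.
- move=> p q /P_mem_raw[i [j [Hij Hj Hp1 Hp2 Hp3]]] /P_mem_raw[i' [j' [Hij' Hj' Hq1 Hq2 Hq3]]] E.
  have : cat_rev p.1 p.2 \in pair_map q by rewrite -E /pair_map set21.
  rewrite /pair_map in_set2 => /orP[/eqP/cr_inj[E1 E2] | /eqP/cr_inj[E1 E2]].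
    by case: p q E1 E2 {E Hp1 Hp2 Hp3 Hq1 Hq2 Hq3} => ? ? [? ?] /= -> ->.
  have Hi : i < size cs by exact: leq_ltn_trans Hij Hj.
  have Hi' : i' < size cs by exact: leq_ltn_trans Hij' Hj'.
  rewrite E1 in Hp1; rewrite E2 in Hp2.
  have e1 := chain_disj H Hi Hj' Hp1 Hq2.
  have e2 := chain_disj H Hj Hi' Hp2 Hq1.
  have eij : i = j by lia.
  subst; rewrite ltnn /= in Hp3 Hq3.
  have Eq : q.1 = q.2 by apply/eqP; rewrite eqEsubset Hq3 -E1 -E2.
  by case: p q E1 E2 Eq {E Hp1 Hp2 Hq1 Hq2 Hp3 Hq3} => ? ? [? ?] /= -> -> ->.
- apply/setP=> X; apply/imsetP/imsetP.
    case=> p Hp ->; exists (cat_rev p.1 p.2) => //.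
    by rewrite qorbit_cr.
  case=> A _ ->; rewrite -(cr_LR A) qorbit_cr.
  have [i [x [Hi Hx E1]]] := find_chain (Lft A) H.
  have [j [y [Hj Hy E2]]] := find_chain (Rgt A) H.
  have [Hle|Hlt] := boolP ((i < j) || ((i == j) && (x <= y))).
    exists (Lft A, Rgt A) => //; apply/P_mem => //.
    exists i, j, x, y; rewrite E1 E2; split => //; first by case/orP: Hle => [/ltnW|/andP[/eqP->]].
    by case/orP: Hle => [->//|/andP[/eqP<- ->]]; rewrite orbT.
  exists (Rgt A, Lft A); last by rewrite /pair_map /= setUC.
  apply/P_mem => //.
  exists j, i, y, x; rewrite E1 E2.
  case: (ltngtP i j) Hlt => //=.
  move=> Eij Hn; subst j; split=> //; split=> //; rewrite -ltnNge in Hn; exact: ltnW.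
- move=> p q _ _ Hs; apply/existsP; exists (cat_rev p.1 p.2); rewrite /pair_map set21 /=.
  by apply/existsP; exists (cat_rev q.1 q.2); rewrite set21.
Qed.
Definition Lpt (sw : bool) (x0 y0 a t : nat) : nat * nat :=
  if t <= a then (if sw then (x0, y0 + t) else (x0 + t, y0))
  else (if sw then (x0 + (t - a), y0 + a) else (x0 + a, y0 + (t - a))).

Lemma Lpt_step sw x0 y0 a t :
  Lpt sw x0 y0 a t.+1 = ((Lpt sw x0 y0 a t).1.+1, (Lpt sw x0 y0 a t).2) \/
  Lpt sw x0 y0 a t.+1 = ((Lpt sw x0 y0 a t).1, (Lpt sw x0 y0 a t).2.+1).
Proof.
rewrite /Lpt; case: sw; case: (leqP t.+1 a) => H1; case: (leqP t a) => H2 /=;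
  try (left; congr pair; lia); try (right; congr pair; lia); lia.
Qed.

Lemma Lpt_sum sw x0 y0 a t : (Lpt sw x0 y0 a t).1 + (Lpt sw x0 y0 a t).2 = x0 + y0 + t.
Proof. rewrite /Lpt; case: sw; case: (leqP t a) => H /=; lia. Qed.

Lemma grid_valid (mi mj s t : nat) : mj <= mi -> s <= mj -> t <= (mi - s) + (mj - s) ->
  [/\ (Lpt false 0 s (mi - s) t).1 <= mi, (Lpt false 0 s (mi - s) t).2 <= mj &
      minn (Lpt false 0 s (mi - s) t).2 (mi - (Lpt false 0 s (mi - s) t).1) = s].
Proof. rewrite /Lpt; case: (leqP t (mi - s)) => H /= H1 H2 H3; split; lia. Qed.

Lemma tri_valid (m s t : nat) : s.*2 <= m -> t <= (m - s.*2) + (m - s.*2) ->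
  [/\ (Lpt true s s (m - s.*2) t).1 <= (Lpt true s s (m - s.*2) t).2,
      (Lpt true s s (m - s.*2) t).2 <= m &
      minn (Lpt true s s (m - s.*2) t).1 (m - (Lpt true s s (m - s.*2) t).2) = s].
Proof. rewrite /Lpt; case: (leqP t (m - s.*2)) => H /= H1 H2; split; lia. Qed.

Lemma grid_cover mi mj x y : mj <= mi -> x <= mi -> y <= mj ->
  minn y (mi - x) <= mj /\
  exists2 t, t <= (mi - minn y (mi - x)) + (mj - minn y (mi - x)) &
    Lpt false 0 (minn y (mi - x)) (mi - minn y (mi - x)) t = (x, y).
Proof.
move=> H1 H2 H3; split; first lia.
case: (leqP y (mi - x)) => H.
  have E : minn y (mi - x) = y by lia.
  exists x; first lia.
  by rewrite /Lpt ifT; [rewrite add0n | lia].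
have E : minn y (mi - x) = mi - x by lia.
exists (x + (y - (mi - x))); first lia.
rewrite /Lpt ifF; last lia.
congr pair; lia.
Qed.

Lemma tri_cover m x y : x <= y -> y <= m ->
  (minn x (m - y)).*2 <= m /\
  exists2 t, t <= (m - (minn x (m - y)).*2) + (m - (minn x (m - y)).*2) &
    Lpt true (minn x (m - y)) (minn x (m - y)) (m - (minn x (m - y)).*2) t = (x, y).
Proof.
move=> H1 H2; split; first lia.
case: (leqP x (m - y)) => H.
  have E : minn x (m - y) = x by lia.
  exists (y - x); first lia.
  rewrite /Lpt ifT; last lia.
  congr pair; lia.
have E : minn x (m - y) = m - y by lia.
exists ((m - (m - y).*2) + (x - (m - y))); first lia.
rewrite /Lpt ifF; last lia.
congr pair; lia.
Qed.
Lemma path_iota (T : Type) (e : rel T) (f : nat -> T) a n :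
  (forall t, a <= t -> t < a + n -> e (f t) (f t.+1)) ->
  path e (f a) [seq f t | t <- iota a.+1 n].
Proof.
elim: n a => [|n IH] a H //=.
rewrite H ?leqnn ?addnS ?ltnS ?leq_addr //=.
apply: IH => t H1 H2; apply: H; [exact: ltnW | by rewrite addnS].
Qed.

Lemma last_iota a n : last a (iota a.+1 n) = a + n.
Proof. by elim: n a => [|n IH] a /=; rewrite ?addn0 // IH addnS. Qed.

Lemma sat_of_steps (T : finType) (f : nat -> {set T}) L :
  (forall t, t < L -> (f t \subset f t.+1) && (#|f t.+1| == #|f t|.+1)) ->
  sat_chain [seq f t | t <- iota 0 L.+1].
Proof. by move=> H; rewrite /= ; apply: path_iota => t _; apply: H. Qed.

Lemma sym_of (T : finType) (f : nat -> {set T}) L n :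
  #|f 0| + #|f L| = n -> sym_chain n [seq f t | t <- iota 0 L.+1].
Proof. by move=> H; rewrite /= last_map last_iota H. Qed.

Lemma flatten_uniq_key (T K : eqType) (key : T -> K) (ks : seq K) (f : K -> seq T) :
  uniq ks -> (forall kk, kk \in ks -> uniq (f kk)) ->
  (forall kk, kk \in ks -> forall z, z \in f kk -> key z = kk) ->
  uniq (flatten (map f ks)).
Proof.
elim: ks => [|kk ks IH] //= /andP[Hn Hu] H1 H2.
rewrite cat_uniq H1 ?mem_head //= IH //; last first.
- by move=> kk' H z Hz; apply: H2 => //; rewrite inE H orbT.
- by move=> kk' H; apply: H1; rewrite inE H orbT.
rewrite andbT; apply/hasP=> -[z /flatten_mapP[kk' Hk' Hz] Hz'].
have E1 := H2 kk (mem_head _ _) z Hz'.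
have E2 : key z = kk' by apply: H2 => //; rewrite inE Hk' orbT.
by move: Hn; rewrite -E1 E2 Hk'.
Qed.
Definition FF k (cs : seq (seq {set 'I_k})) (z : (nat * nat) * (nat * nat)) :=
  cat_rev (EE cs z.1.1 z.2.1) (EE cs z.1.2 z.2.2).
Definition validZ k (cs : seq (seq {set 'I_k})) (z : (nat * nat) * (nat * nat)) :=
  [&& z.1.1 < size cs, z.1.2 < size cs, z.2.1 < size (CC cs z.1.1) & z.2.2 < size (CC cs z.1.2)].
Definition validP k (cs : seq (seq {set 'I_k})) (z : (nat * nat) * (nat * nat)) :=
  [&& z.1.1 <= z.1.2, z.1.2 < size cs, z.2.1 < size (CC cs z.1.1), z.2.2 < size (CC cs z.1.2)
    & (z.1.1 < z.1.2) || (z.2.1 <= z.2.2)].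

Lemma validPZ k (cs : seq (seq {set 'I_k})) z : validP cs z -> validZ cs z.
Proof.
case/and5P=> H1 H2 H3 H4 _; rewrite /validZ H2 H3 H4 !andbT.
exact: leq_ltn_trans H1 H2.
Qed.

Lemma lt_size_mm k (cs : seq (seq {set 'I_k})) i x : is_scd [set: {set 'I_k}] k cs ->
  i < size cs -> (x < size (CC cs i)) = (x <= mm cs i).
Proof. by move=> H Hi; rewrite /mm; case: (size (CC cs i)) (size_pos H Hi). Qed.

Lemma mm_le k (cs : seq (seq {set 'I_k})) i : is_scd [set: {set 'I_k}] k cs ->
  i < size cs -> mm cs i <= k.
Proof. by move=> H Hi; have := RR_mm H Hi; lia. Qed.

Lemma FF_step k (cs : seq (seq {set 'I_k})) z z' : is_scd [set: {set 'I_k}] k cs ->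
  validZ cs z -> validZ cs z' -> z'.1 = z.1 ->
  (z'.2 = (z.2.1.+1, z.2.2) \/ z'.2 = (z.2.1, z.2.2.+1)) ->
  (FF cs z \subset FF cs z') && (#|FF cs z'| == #|FF cs z|.+1).
Proof.
move=> H; case: z => [[i j] [x y]]; case: z' => [[i' j'] [x' y']] /=.
move=> /and4P[/= Hi Hj Hx Hy] /and4P[/= _ _ Hx' Hy'] [Ei Ej] [] [Ex Ey]; subst;
  rewrite /FF /= cr_sub !cr_card.
  rewrite (EE_sub H Hi (leqnSn x) Hx') subxx /= !(EE_card H Hi) // !(EE_card H Hj) //.
  by apply/eqP; lia.
rewrite (EE_sub H Hj (leqnSn y) Hy') subxx /= !(EE_card H Hi) // !(EE_card H Hj) //.
by apply/eqP; lia.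
Qed.

Lemma FF_inj k (cs : seq (seq {set 'I_k})) z z' : is_scd [set: {set 'I_k}] k cs ->
  validZ cs z -> validZ cs z' -> FF cs z = FF cs z' -> z = z'.
Proof.
move=> H; case: z => [[i j] [x y]]; case: z' => [[i' j'] [x' y']] /=.
move=> /and4P[/= Hi Hj Hx Hy] /and4P[/= Hi' Hj' Hx' Hy'] /cr_inj[/= E1 E2].
have ei : i = i'.
  apply: (chain_disj H Hi Hi' (mem_nth set0 Hx)); rewrite -[_ \in _]/(EE cs i x \in _) E1.
  exact: mem_nth.
have ej : j = j'.
  apply: (chain_disj H Hj Hj' (mem_nth set0 Hy)); rewrite -[_ \in _]/(EE cs j y \in _) E2.
  exact: mem_nth.
subst i' j'.
by rewrite (EE_inj H Hi Hx Hx' E1) (EE_inj H Hj Hy Hy' E2).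
Qed.

Definition kgrid (kk : (nat * nat) * nat) := kk.1.1 < kk.1.2.
Definition ka k (cs : seq (seq {set 'I_k})) kk :=
  if kgrid kk then mm cs kk.1.1 - kk.2 else mm cs kk.1.1 - kk.2.*2.
Definition kb k (cs : seq (seq {set 'I_k})) kk :=
  if kgrid kk then mm cs kk.1.2 - kk.2 else mm cs kk.1.1 - kk.2.*2.
Definition kx0 (kk : (nat * nat) * nat) := if kgrid kk then 0 else kk.2.
Definition hpt k (cs : seq (seq {set 'I_k})) kk t : (nat * nat) * (nat * nat) :=
  (kk.1, Lpt (~~ kgrid kk) (kx0 kk) kk.2 (ka cs kk) t).
Definition chI k (cs : seq (seq {set 'I_k})) kk :=
  [seq hpt cs kk t | t <- iota 0 (ka cs kk + kb cs kk).+1].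
Definition validK k (cs : seq (seq {set 'I_k})) (kk : (nat * nat) * nat) :=
  ((kk.1.1 < kk.1.2) && (kk.1.2 < size cs) && (kk.2 <= mm cs kk.1.2)) ||
  ((kk.1.1 == kk.1.2) && (kk.1.1 < size cs) && (kk.2.*2 <= mm cs kk.1.1)).
Definition keyf k (cs : seq (seq {set 'I_k})) (z : (nat * nat) * (nat * nat)) :=
  (z.1, if z.1.1 < z.1.2 then minn z.2.2 (mm cs z.1.1 - z.2.1)
        else minn z.2.1 (mm cs z.1.1 - z.2.2)).
Definition keys k (cs : seq (seq {set 'I_k})) :=
  [seq kk <- undup [seq (ij, s) | ij <- [seq (i, j) | i <- iota 0 (size cs), j <- iota 0 (size cs)],
                                  s <- iota 0 (k + 1)] | validK cs kk].

Lemma chain_valid k (cs : seq (seq {set 'I_k})) kk t : is_scd [set: {set 'I_k}] k cs ->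
  sorted geq (map size cs) -> validK cs kk -> t <= ka cs kk + kb cs kk ->
  validP cs (hpt cs kk t) /\ keyf cs (hpt cs kk t) = kk.
Proof.
move=> H Hs; case: kk => [[i j] s]; rewrite /validK /hpt /ka /kb /kx0 /kgrid /= => /orP[].
  case/andP=> /andP[Hij Hj] Hsj; rewrite Hij /= => Ht.
  have Hi : i < size cs by exact: ltn_trans Hij Hj.
  have Hm : mm cs j <= mm cs i.
    have := size_mono Hs (ltnW Hij) Hj; rewrite /mm; lia.
  have [V1 V2 V3] := grid_valid Hm Hsj Ht.
  by rewrite /validP /keyf /= Hij (ltnW Hij) Hj !(lt_size_mm _ H) // V1 V2 V3.
case/andP=> /andP[/eqP <- Hi] Hsi; rewrite ltnn /= => Ht.
have [V1 V2 V3] := tri_valid Hsi Ht.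
by rewrite /validP /keyf /= ltnn leqnn Hi !(lt_size_mm _ H) // V1 V2 V3 orbT (leq_trans V1 V2).
Qed.

Lemma chain_cover k (cs : seq (seq {set 'I_k})) z : is_scd [set: {set 'I_k}] k cs ->
  sorted geq (map size cs) -> validP cs z ->
  exists kk t, [/\ validK cs kk, t <= ka cs kk + kb cs kk & z = hpt cs kk t].
Proof.
move=> H Hs; case: z => [[i j] [x y]]; case/and5P => /= Hij Hj.
have Hi : i < size cs by exact: leq_ltn_trans Hij Hj.
rewrite !(lt_size_mm _ H) // => Hx Hy.
case: (ltngtP i j) Hij => // [Hc|eij] _ /=; rewrite ?orbF => Hxy.
  have Hm : mm cs j <= mm cs i.
    have := size_mono Hs (ltnW Hc) Hj; rewrite /mm; lia.
  have [C1 [t Ht E]] := grid_cover Hm Hx Hy.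
  exists ((i, j), minn y (mm cs i - x)), t.
  by rewrite /validK /hpt /ka /kb /kx0 /kgrid /= Hc Hj C1 /= E.
subst j; have [C1 [t Ht E]] := tri_cover Hxy Hy.
exists ((i, i), minn x (mm cs i - y)), t.
by rewrite /validK /hpt /ka /kb /kx0 /kgrid /= ltnn eqxx Hi C1 orbT /= E.
Qed.

Lemma keys_mem k (cs : seq (seq {set 'I_k})) kk : is_scd [set: {set 'I_k}] k cs ->
  (kk \in keys cs) = validK cs kk.
Proof.
move=> H; rewrite /keys mem_filter andb_idr // mem_undup.
case: kk => [[i j] s] /orP[] /=.
  case/andP=> /andP[Hij Hj] Hsj.
  have Hi : i < size cs by exact: ltn_trans Hij Hj.
  have := mm_le H Hj => Hmk.
  apply: (@allpairs_f _ _ _ pair); [apply: (@allpairs_f _ _ _ pair)|]; rewrite mem_iota; lia.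
case/andP=> /andP[/eqP <- Hi] Hsi.
have := mm_le H Hi => Hmk.
apply: (@allpairs_f _ _ _ pair); [apply: (@allpairs_f _ _ _ pair)|]; rewrite mem_iota; lia.
Qed.
Lemma FF_card k (cs : seq (seq {set 'I_k})) z : is_scd [set: {set 'I_k}] k cs ->
  validZ cs z -> #|FF cs z| = RR cs z.1.1 + RR cs z.1.2 + (z.2.1 + z.2.2).
Proof.
move=> H /and4P[Hi Hj Hx Hy]; rewrite /FF cr_card (EE_card H Hi Hx) (EE_card H Hj Hy).
lia.
Qed.

Lemma mem_chI k (cs : seq (seq {set 'I_k})) kk z :
  z \in chI cs kk -> exists2 t, t <= ka cs kk + kb cs kk & z = hpt cs kk t.
Proof. by case/mapP=> t; rewrite mem_iota add0n ltnS => Ht ->; exists t. Qed.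

Lemma mem_IC k (cs : seq (seq {set 'I_k})) z : is_scd [set: {set 'I_k}] k cs ->
  sorted geq (map size cs) -> z \in flatten (map (chI cs) (keys cs)) -> validP cs z.
Proof.
move=> H Hs /flatten_mapP[kk Hkk /mem_chI[t Ht ->]].
by have [] := chain_valid H Hs (etrans (esym (keys_mem _ H)) Hkk) Ht.
Qed.

Lemma part1 k (cs : seq (seq {set 'I_k})) : is_scd [set: {set 'I_k}] k cs ->
  sorted geq (map size cs) ->
  exists cs2 : seq (seq {set 'I_(k + k)}),
      is_scd [set cat_rev p.1 p.2 | p in P_pairs cs] (k + k) cs2.
Proof.
move=> H Hs; exists (map (map (FF cs)) (map (chI cs) (keys cs))).
apply/andP; split.
  apply/allP=> c /mapP[c' /mapP[kk Hkk ->] ->].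
  have Vk : validK cs kk by rewrite -keys_mem.
  have HV t : t <= ka cs kk + kb cs kk -> validZ cs (hpt cs kk t).
    by move=> Ht; have [V _] := chain_valid H Hs Vk Ht; exact: validPZ.
  rewrite /chI -map_comp; apply/andP; split.
    apply: sat_of_steps => t Ht /=; apply: FF_step => //; try apply: HV; try lia.
    by rewrite /hpt /=; apply: Lpt_step.
  apply: sym_of => /=.
  rewrite (FF_card H (HV 0 (leq0n _))) (FF_card H (HV _ (leqnn _))).
  rewrite /hpt /= !Lpt_sum.
  move: Vk; case: kk {Hkk HV} => [[i j] s]; rewrite /validK /ka /kb /kx0 /kgrid /= => /orP[].
    case/andP=> /andP[Hij Hj] Hsj; rewrite Hij.
    have Hi : i < size cs by exact: ltn_trans Hij Hj.
    have Hm : mm cs j <= mm cs i.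
      have := size_mono Hs (ltnW Hij) Hj; rewrite /mm; lia.
    have := RR_mm H Hi; have := RR_mm H Hj; lia.
  case/andP=> /andP[/eqP <- Hi] Hsi; rewrite ltnn.
  have := RR_mm H Hi; lia.
have -> : flatten (map (map (FF cs)) (map (chI cs) (keys cs)))
        = map (FF cs) (flatten (map (chI cs) (keys cs))).
  by elim: (map (chI cs) (keys cs)) => //= a l ->; rewrite map_cat.
apply: uniq_perm; last 2 first.
- exact: enum_uniq.
- move=> A; rewrite mem_enum; apply/mapP/imsetP.
    case=> z Hz ->; have := mem_IC H Hs Hz.
    case: z {Hz} => [[i j] [x y]] Hv; exists (EE cs i x, EE cs j y) => //.
    apply/P_mem => //; exists i, j, x, y.
    by case/and5P: Hv => /= *; split.
  case=> p /(P_mem _ H)[i [j [x [y [Hij Hj Hx Hy [Ep Hc]]]]]] ->.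
  have Hv : validP cs ((i, j), (x, y)) by rewrite /validP /= Hij Hj Hx Hy Hc.
  have [kk [t [Vk Ht E]]] := chain_cover H Hs Hv.
  exists ((i, j), (x, y)); last by rewrite Ep.
  apply/flatten_mapP; exists kk; first by rewrite keys_mem.
  by rewrite E; apply: map_f; rewrite mem_iota; lia.
rewrite map_inj_in_uniq; last first.
  by move=> z z' Hz Hz'; apply: FF_inj => //; apply: validPZ; apply: mem_IC.
apply: (@flatten_uniq_key _ _ (keyf cs)).
- by rewrite filter_uniq // undup_uniq.
- move=> kk _; rewrite /chI map_inj_in_uniq ?iota_uniq //.
  move=> t t' _ _ E; have := congr1 (fun z => z.2.1 + z.2.2) E.
  by rewrite /hpt /= !Lpt_sum; lia.
- move=> kk Hkk z /mem_chI[t Ht ->].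
  by have [] := chain_valid H Hs (etrans (esym (keys_mem _ H)) Hkk) Ht.
Qed.

Theorem mainTheorem9 (k : nat) (cs : seq (seq {set 'I_k})) :
  0 < k ->
  is_scd [set: {set 'I_k}] k cs ->
  sorted geq (map size cs) ->
  (exists cs2 : seq (seq {set 'I_(k + k)}),
      is_scd [set cat_rev p.1 p.2 | p in P_pairs cs] (k + k) cs2) /\
  [/\ {in P_pairs cs &, injective (@pair_map k)},
      (@pair_map k) @: P_pairs cs = quot_poset (Grho k)
    & {in P_pairs cs &, forall p q,
          cat_rev p.1 p.2 \subset cat_rev q.1 q.2 ->
          qle (pair_map p) (pair_map q)}].
Proof.
move=> _ H Hs; split; first exact: part1.
exact: part2.
Qed.
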